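(* Let $G$ be a graph and $\{C_1,\dots,C_\ell\}$ a min-max clique covering of $G$ with simple intersection. If $S$ is a positive zero forcing set of $G$, then for all $i,j\in\{1,\dots,\ell\}$ the sets $(V(G)\setminus S)\cap C_{i,j}$ and $(V(G)\setminus S)\cap C_{i,i}$ each have size at most one.
   Context: A clique covering of a graph is a set of cliques such that every edge lies in at least one of them; $\operatorname{cc}(G)$ is its minimum size. A min-max clique covering is a clique covering of size $\operatorname{cc}(G)$ consisting of maximal cliques; it has simple intersection if no three distinct cliques of it share a vertex. $C_{i,j}=C_i\cap C_j$ for $i\ne j$ and $C_{i,i}=C_i\setminus\bigcup_{j\ne i}C_j$. Positive zero forcing: initially the vertices of $S$ are black and all others white; repeatedly, let $W_1,\dots,W_k$ be the vertex sets of components of $G$ minus the black vertices; a black vertex $u$ whose only white neighbour in the subgraph induced by $W_i\cup(\text{black vertices})$ is $w$ may turn $w$ black. $S$ is a positive zero forcing set if eventually all vertices become black. *)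

(* Defs.v *)
(* A finite simple graph is a symmetric irreflexive
   relation e : rel T on a finType T (vertex set V(G) = T). *)
From mathcomp Require Import all_boot.
Set Implicit Arguments. Unset Strict Implicit. Unset Printing Implicit Defensive.

Section Graph.
Variables (T : finType) (e : rel T).

Definition clique (K : {set T}) : Prop :=
  forall x y, x \in K -> y \in K -> x != y -> e x y.

Definition maximal_clique (K : {set T}) : Prop :=
  clique K /\ forall K' : {set T}, clique K' -> K \subset K' -> K' = K.

Definition clique_covering (P : {set {set T}}) : Prop :=
  (forall K, K \in P -> clique K) /\
  (forall x y, e x y -> exists2 K, K \in P & (x \in K) && (y \in K)).

Definition is_cc (n : nat) : Prop :=
  (exists P, clique_covering P /\ #|P| = n) /\
  (forall P, clique_covering P -> n <= #|P|).

Definition min_max_clique_covering (l : nat) (C : 'I_l -> {set T}) : Prop :=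
  injective C /\
  clique_covering [set C i | i in 'I_l] /\
  is_cc l /\
  (forall i, maximal_clique (C i)).

Definition simple_intersection (l : nat) (C : 'I_l -> {set T}) : Prop :=
  forall i j k : 'I_l, i != j -> j != k -> i != k -> C i :&: C j :&: C k = set0.

Definition Cij (l : nat) (C : 'I_l -> {set T}) (i j : 'I_l) : {set T} :=
  if i == j then C i :\: \bigcup_(k | k != i) C k else C i :&: C j.

Definition white_rel (B : {set T}) : rel T :=
  fun x y => [&& e x y, x \notin B & y \notin B].

(* Positive zero forcing: sets of black vertices reachable from S by
   applying the positive colour-change rule one force at a time.
   A force u -> w with w white: the component W of G - B containing w is
   [set z | z \notin B & connect (white_rel B) w z], and w must be the only
   white neighbour of u in G[W ∪ B], i.e. the only neighbour of u in W. *)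
Inductive pzf_reach (S : {set T}) : {set T} -> Prop :=
| pzf_base : pzf_reach S S
| pzf_step (B : {set T}) (u w : T) :
    pzf_reach S B -> u \in B -> w \notin B -> e u w ->
    (forall z, z \notin B -> connect (white_rel B) w z -> e u z -> z = w) ->
    pzf_reach S (w |: B).

Definition positive_zero_forcing_set (S : {set T}) : Prop :=
  pzf_reach S [set: T].

End Graph.

(* Main.v *)
Require Import Defs.
From mathcomp Require Import all_boot.

Lemma twins_not_both_white (T : finType) (e : rel T) (S : {set T}) (x y : T) :
  x != y -> e x y -> e y x ->
  (forall u, u != y -> e u x -> e u y) ->
  (forall u, u != x -> e u y -> e u x) ->
  x \notin S -> y \notin S ->
  forall B, pzf_reach e S B -> x \notin B /\ y \notin B.
Proof.
move=> nxy exy eyx tx ty xS yS B; elim => [|B' u w _ [xB yB] uB wB euw Hf].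
  by [].
have uy : u != y by apply/eqP => E; rewrite E (negbTE yB) in uB.
have ux : u != x by apply/eqP => E; rewrite E (negbTE xB) in uB.
have wx : w != x.
  apply/eqP => E; subst w.
  have c : connect (white_rel e B') x y by apply: connect1; rewrite /white_rel exy xB yB.
  by have := Hf y yB c (tx u uy euw) => E; rewrite E eqxx in nxy.
have wy : w != y.
  apply/eqP => E; subst w.
  have c : connect (white_rel e B') y x by apply: connect1; rewrite /white_rel eyx xB yB.
  by have := Hf x xB c (ty u ux euw) => E; rewrite E eqxx in nxy.
by rewrite !in_setU1 (negbTE xB) (negbTE yB) !orbF eq_sym (negbTE wx) eq_sym (negbTE wy).
Qed.

Theorem mainTheorem13 (T : finType) (e : rel T)
  (e_sym : symmetric e) (e_irr : irreflexive e)
  (l : nat) (C : 'I_l -> {set T})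
  (hC : min_max_clique_covering e C) (hsi : simple_intersection C)
  (S : {set T}) (hS : positive_zero_forcing_set e S) :
  forall i j : 'I_l, #|~: S :&: Cij C i j| <= 1.
Proof.
move=> i j; rewrite leqNgt; apply/negP => /card_gt1P [x [y [hx hy nxy]]].
move: hx hy; rewrite !inE => /andP [xS xC] /andP [yS yC].
case: hC => _ [[hcl hcov] _].
have cl : forall k, clique e (C k) by move=> k; apply: hcl; apply: imset_f.
have key : forall a b, a \in Cij C i j -> b \in Cij C i j ->
    forall k, a \in C k -> b \in C k.
  move=> a b; rewrite /Cij; case: eqP => [_|/eqP nij].
    rewrite !inE => /andP [na ai] /andP [_ bi] k ak.
    case: (eqVneq k i) => [-> //|ki].
    by case/negP: na; apply/bigcupP; exists k.
  rewrite !inE => /andP [ai aj] /andP [bi bj] k ak.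
  case: (eqVneq k i) => [-> //|ki]; case: (eqVneq k j) => [-> //|kj].
  have := hsi i j k nij _ _; rewrite eq_sym kj eq_sym ki => /(_ isT isT) /setP /(_ a).
  by rewrite !inE ai aj ak.
have [k0 xk0] : exists k, x \in C k.
  move: xC; rewrite /Cij; case: eqP => _; rewrite !inE => /andP [h1 h2]; by exists i.
have twin : forall a b, a \in Cij C i j -> b \in Cij C i j -> forall u, u != b -> e u a -> e u b.
  move=> a b ha hb u ub eua.
  have [K /imsetP [k _ ->] /andP [uk ak]] := hcov u a eua.
  exact: (cl k u b uk (key a b ha hb k ak) ub).
have exy : e x y := cl k0 x y xk0 (key x y xC yC k0 xk0) nxy.
have [] := @twins_not_both_white T e S x y nxy exy (ltac:(by rewrite e_sym)) (twin x y xC yC) (twin y x yC xC) xS yS _ hS.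
by rewrite inE.
Qed.
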